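(* Let $g$ be a bounded, non-constant completely monotonic function on $(0,\infty)$. Then for all $x,y>0$, $$g(x)<\frac{(y/x)^y}{\Gamma(y)}\int_0^\infty g(t)\,t^{y-1}e^{-ty/x}\,dt.$$ *)

(* Defs.v *)
From Stdlib Require Import Reals.
From Coquelicot Require Import Coquelicot.
Open Scope R_scope.

Definition completely_monotonic (g : R -> R) : Prop :=
  forall (n : nat) (x : R), 0 < x ->
    ex_derive_n g n x /\ 0 <= (-1) ^ n * Derive_n g n x.

Definition bounded_on_pos (g : R -> R) : Prop :=
  exists M : R, forall x : R, 0 < x -> Rabs (g x) <= M.

Definition nonconstant_on_pos (g : R -> R) : Prop :=
  exists a b : R, 0 < a /\ 0 < b /\ g a <> g b.

Definition Gamma (y : R) : R :=
  RInt_gen (fun t => Rpower t (y - 1) * exp (- t)) (at_right 0) (Rbar_locally p_infty).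

(* Main.v *)
Require Import Defs.

From Stdlib Require Import Reals Lra Classical.
From Coquelicot Require Import Coquelicot.
Open Scope R_scope.

Definition cpos (f : R -> R) := forall t, 0 < t -> continuous f t.
Definition npos (f : R -> R) := forall t, 0 < t -> 0 <= f t.

Lemma Lplus (a b : R) : plus a b = a + b. Proof. reflexivity. Qed.
Lemma Lscal (a b : R) : scal a b = a * b. Proof. reflexivity. Qed.
Lemma Lminus (a b : R) : minus a b = a - b. Proof. reflexivity. Qed.

Lemma ball_abs (l eps y : R) : ball l eps y -> Rabs (y - l) < eps.
Proof. intros H. unfold ball in H; simpl in H. unfold AbsRing_ball, abs, minus, plus, opp in H; simpl in H. exact H. Qed.

Lemma abs_ball (l : R) (eps : posreal) (y : R) : Rabs (y - l) < eps -> ball l eps y.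
Proof. intros H. unfold ball; simpl. unfold AbsRing_ball, abs, minus, plus, opp; simpl. exact H. Qed.

Lemma exR f a b : cpos f -> 0 < a -> 0 < b -> ex_RInt f a b.
Proof.
  intros Hc Ha Hb. apply (ex_RInt_continuous (V:=R_CompleteNormedModule)). intros z Hz. apply Hc.
  assert (0 < Rmin a b) by (apply Rmin_glb_lt; auto). lra.
Qed.

Lemma mono f a' a b b' : cpos f -> npos f -> 0 < a' -> a' <= a -> a <= b -> b <= b' ->
  RInt f a b <= RInt f a' b'.
Proof.
  intros Hc Hn H1 H2 H3 H4.
  rewrite <- (RInt_Chasles f a' a b') by (apply exR; auto; lra).
  rewrite <- (RInt_Chasles f a b b') by (apply exR; auto; lra).
  repeat change (plus ?u ?v) with (u+v).
  assert (0 <= RInt f a' a).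
  { apply RInt_ge_0; auto. apply exR; auto; lra. intros; apply Hn; lra. }
  assert (0 <= RInt f b b').
  { apply RInt_ge_0; auto. apply exR; auto; lra. intros; apply Hn; lra. }
  lra.
Qed.

Definition IG (f : R -> R) (l : R) := is_RInt_gen (V:=R_NormedModule) f (at_right 0) (Rbar_locally p_infty) l.

Lemma extract f l : IG f l -> forall (eps : posreal) a1 b1, 0 < a1 ->
  exists a b, 0 < a < a1 /\ b1 < b /\ Rabs (RInt f a b - l) < eps.
Proof.
  intros H eps a1 b1 Ha1.
  assert (HP := H (ball l eps) (locally_ball l eps)).
  unfold filtermapi in HP. destruct HP as [Q R HQ HR HQR].
  destruct HQ as [d Hd]. destruct HR as [M HM].
  assert (Hd0 := cond_pos d).
  set (a := Rmin a1 d / 2). set (b := Rmax b1 M + 1).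
  assert (Ha : 0 < a < Rmin a1 d).
  { assert (0 < Rmin a1 d) by (apply Rmin_glb_lt; auto). unfold a; lra. }
  assert (Hm1 := Rmin_l a1 d). assert (Hm2 := Rmin_r a1 d).
  assert (Hb1 := Rmax_l b1 M). assert (Hb2 := Rmax_r b1 M).
  destruct (HQR a b) as [yv [Hi Hb]].
  { apply Hd. apply abs_ball. rewrite Rabs_pos_eq; lra. lra. }
  { apply HM. unfold b; lra. }
  exists a, b. split. lra. split. unfold b; lra.
  simpl in Hi. rewrite (is_RInt_unique _ _ _ _ Hi). apply ball_abs; auto.
Qed.

Lemma IG_le f l a b : cpos f -> npos f -> IG f l -> 0 < a -> a <= b -> RInt f a b <= l.
Proof.
  intros Hc Hn H Ha Hab.
  destruct (Rle_or_lt (RInt f a b) l) as [|Hlt]; auto.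
  destruct (extract f l H (mkposreal _ (Rlt_Rminus _ _ Hlt)) a b Ha) as [a' [b' [H1 [H2 H3]]]].
  simpl in H3.
  assert (RInt f a b <= RInt f a' b') by (apply mono; auto; lra).
  apply Rabs_def2 in H3. lra.
Qed.

Lemma IG_ge f l m : IG f l -> (forall a b, 0 < a -> a <= b -> RInt f a b <= m) -> l <= m.
Proof.
  intros H Hm.
  destruct (Rle_or_lt l m) as [|Hlt]; auto.
  destruct (extract f l H (mkposreal _ (Rlt_Rminus _ _ Hlt)) 1 1 Rlt_0_1) as [a' [b' [H1 [H2 H3]]]].
  simpl in H3. assert (RInt f a' b' <= m) by (apply Hm; lra).
  apply Rabs_def2 in H3. lra.
Qed.

Lemma IG_conv f B : cpos f -> npos f -> (forall a b, 0 < a -> a <= b -> RInt f a b <= B) ->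
  exists l, IG f l.
Proof.
  intros Hc Hn HB.
  set (E := fun r => exists a b, 0 < a /\ a <= b /\ r = RInt f a b).
  assert (Hbd : bound E). { exists B. intros r [a [b [H1 [H2 ->]]]]. apply HB; auto. }
  assert (Hne : exists r, E r). { exists (RInt f 1 1). exists 1, 1. lra. }
  destruct (completeness E Hbd Hne) as [l [Hub Hlub]].
  exists l. unfold IG, is_RInt_gen, filterlimi, filter_le, filtermapi.
  intros P [eps HP].
  assert (Hex : exists r, E r /\ l - eps < r).
  { apply NNPP. intros Hno. assert (l <= l - eps).
    { apply Hlub. intros r Er. destruct (Rle_or_lt r (l - eps)); auto.
      exfalso. apply Hno. exists r; auto. }
    assert (Heps := cond_pos eps). lra. }
  destruct Hex as [r [[a0 [b0 [Ha0 [Hab0 ->]]]] Hr]].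
  apply Filter_prod with (fun a => 0 < a < a0) (fun b => b0 < b).
  - exists (mkposreal a0 Ha0). intros u Hu Hu0. apply ball_abs in Hu. simpl in Hu.
    rewrite Rminus_0_r, Rabs_pos_eq in Hu; lra.
  - exists b0. auto.
  - intros a b Ha Hb. exists (RInt f a b). split.
    + apply (RInt_correct (V:=R_CompleteNormedModule)). apply exR; auto; lra.
    + apply HP. apply abs_ball.
      assert (RInt f a0 b0 <= RInt f a b) by (apply mono; auto; lra).
      assert (RInt f a b <= l). { apply Hub. exists a, b. repeat split; lra. }
      rewrite Rabs_left1; lra.
Qed.

From Stdlib Require Import Reals Lra Classical FunctionalExtensionality.
From Coquelicot Require Import Coquelicot.
Open Scope R_scope.

Lemma expm (u v : R) : u <= v -> exp u <= exp v.
Proof. intros H. destruct (Rle_lt_or_eq_dec _ _ H) as [H'|H']. apply Rlt_le, exp_increasing; auto. rewrite H'; lra. Qed.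

Lemma exp_le1 (u : R) : u <= 0 -> exp u <= 1.
Proof. intros H. rewrite <- exp_0. apply expm. auto. Qed.

Lemma exp_lt_ln (z e : R) : 0 < e -> z < ln e -> exp z < e.
Proof. intros He H. rewrite <- (exp_ln e He). apply exp_increasing; auto. Qed.

Lemma ln_le_sqrt (t : R) : 0 < t -> ln t <= 2 * sqrt t.
Proof.
  intros Ht. assert (Hs : 0 < sqrt t) by (apply sqrt_lt_R0; auto).
  assert (E : t = sqrt t * sqrt t) by (rewrite sqrt_sqrt; lra).
  rewrite E at 1. rewrite ln_mult by auto.
  assert (H := exp_ineq1_le (ln (sqrt t))). rewrite exp_ln in H by auto. lra.
Qed.

Lemma key_bound (lam y t : R) : 0 < lam -> 0 < y -> 0 < t ->
  y * ln t - lam * t <= 2 * y * y / lam - lam * t / 2.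
Proof.
  intros Hl Hy Ht. assert (H := ln_le_sqrt t Ht).
  assert (Hs : 0 <= sqrt t) by apply sqrt_pos.
  assert (E : sqrt t * sqrt t = t) by (apply sqrt_sqrt; lra).
  assert (y * ln t <= 2 * y * sqrt t) by nra.
  assert (2 * y * sqrt t <= 2 * y * y / lam + lam * t / 2).
  { assert (0 <= (lam * sqrt t - 2 * y) * (lam * sqrt t - 2 * y)) by (pose proof (Rle_0_sqr (lam * sqrt t - 2 * y)); unfold Rsqr in *; lra).
    assert (Q : 2 * y * y / lam + lam * t / 2 - 2 * y * sqrt t = (lam * sqrt t - 2 * y) * (lam * sqrt t - 2 * y) / (2 * lam)).
    { clear -E Hl. remember (sqrt t) as s. rewrite <- E. field. lra. }
    assert (0 <= (lam * sqrt t - 2 * y) * (lam * sqrt t - 2 * y) / (2 * lam)).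
    { apply Rmult_le_pos; auto. apply Rlt_le, Rinv_0_lt_compat; lra. }
    lra. }
  lra.
Qed.

Definition w (lam y t : R) := Rpower t (y - 1) * exp (- (lam * t)).
Definition Fp (lam y t : R) := exp (y * ln t - lam * t).

Lemma w_pos lam y t : 0 < w lam y t.
Proof. unfold w, Rpower. apply Rmult_lt_0_compat; apply exp_pos. Qed.

Lemma w_Fp lam y t : 0 < t -> w lam y t = Fp lam y t / t.
Proof.
  intros Ht. unfold w, Fp, Rpower.
  replace (y * ln t - lam * t) with ((y - 1) * ln t + - (lam * t) + ln t) by ring.
  rewrite !exp_plus, exp_ln by auto. field. lra.
Qed.

Lemma w_cont lam y : cpos (w lam y).
Proof.
  intros t Ht. apply (ex_derive_continuous (K:=R_AbsRing) (V:=R_NormedModule)). unfold w, Rpower. auto_derive. lra.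
Qed.

Lemma w_npos lam y : npos (w lam y).
Proof. intros t _. apply Rlt_le, w_pos. Qed.

Lemma pow_cont c : cpos (fun t => Rpower t c).
Proof.
  intros t Ht. apply (ex_derive_continuous (K:=R_AbsRing) (V:=R_NormedModule)).
  unfold Rpower. auto_derive. lra.
Qed.

Lemma Rpower_m1 t y : 0 < t -> Rpower t (y - 1) = exp (y * ln t) / t.
Proof.
  intros Ht. unfold Rpower.
  replace (y * ln t) with ((y - 1) * ln t + ln t) by ring.
  rewrite exp_plus, exp_ln by auto. field. lra.
Qed.

Lemma int_pow y a : 0 < y -> 0 < a -> a <= 1 -> RInt (fun t => Rpower t (y - 1)) a 1 <= 1 / y.
Proof.
  intros Hy Ha Ha1.
  assert (H : is_RInt (V:=R_CompleteNormedModule) (fun t => Rpower t (y - 1)) a 1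
              (minus ((fun t => exp (y * ln t) / y) 1) ((fun t => exp (y * ln t) / y) a))).
  { apply (is_RInt_derive (V:=R_CompleteNormedModule) (fun t => exp (y * ln t) / y)).
    - intros t Ht. rewrite Rmin_left, Rmax_right in Ht by lra.
      auto_derive. lra. rewrite Rpower_m1 by lra. field. split; lra.
    - intros t Ht. rewrite Rmin_left, Rmax_right in Ht by lra. apply pow_cont. lra. }
  apply is_RInt_unique in H. rewrite H. rewrite Lminus. simpl.
  rewrite ln_1, Rmult_0_r, exp_0.
  assert (0 < exp (y * ln a)) by apply exp_pos.
  unfold Rdiv. assert (0 < / y) by (apply Rinv_0_lt_compat; auto). nra.
Qed.

Lemma int_exp lam K b : 0 < lam -> 0 <= K -> 1 <= b ->
  RInt (fun t => K * exp (- (lam / 2 * t))) 1 b <= 2 * K / lam.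
Proof.
  intros Hl HK Hb.
  assert (H : is_RInt (V:=R_CompleteNormedModule) (fun t => K * exp (- (lam / 2 * t))) 1 b
              (minus ((fun t => - (2 * K / lam) * exp (- (lam / 2 * t))) b)
                     ((fun t => - (2 * K / lam) * exp (- (lam / 2 * t))) 1))).
  { apply (is_RInt_derive (V:=R_CompleteNormedModule) (fun t => - (2 * K / lam) * exp (- (lam / 2 * t)))).
    - intros t Ht. auto_derive. auto. field. lra.
    - intros t Ht. apply (ex_derive_continuous (K:=R_AbsRing) (V:=R_NormedModule)). auto_derive. auto. }
  apply is_RInt_unique in H. rewrite H. rewrite Lminus. simpl.
  assert (0 < exp (- (lam / 2 * b))) by apply exp_pos.
  assert (exp (- (lam / 2 * 1)) <= 1) by (apply exp_le1; lra).
  assert (0 <= 2 * K / lam) by (unfold Rdiv; apply Rmult_le_pos; [lra| apply Rlt_le, Rinv_0_lt_compat; auto]).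
  nra.
Qed.

Lemma w_bound lam y : 0 < lam -> 0 < y -> forall a b, 0 < a -> a <= b ->
  RInt (w lam y) a b <= 1 / y + 2 * exp (2 * y * y / lam) / lam.
Proof.
  intros Hl Hy a b Ha Hab.
  set (a' := Rmin a 1). set (b' := Rmax b 1).
  assert (Ha'1 : a' <= 1) by apply Rmin_r. assert (Ha'2 : a' <= a) by apply Rmin_l.
  assert (Ha'0 : 0 < a') by (apply Rmin_glb_lt; lra).
  assert (Hb'1 : 1 <= b') by apply Rmax_r. assert (Hb'2 : b <= b') by apply Rmax_l.
  assert (H1 : RInt (w lam y) a b <= RInt (w lam y) a' b').
  { apply mono; auto using w_cont, w_npos; lra. }
  rewrite <- (RInt_Chasles (w lam y) a' 1 b') in H1 by (apply exR; auto using w_cont; lra).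
  rewrite Lplus in H1.
  assert (H2 : RInt (w lam y) a' 1 <= 1 / y).
  { eapply Rle_trans; [| apply (int_pow y a'); auto].
    apply RInt_le; auto. apply exR; auto using w_cont; lra. apply exR; auto using pow_cont; lra.
    intros t Ht. unfold w.
    assert (exp (- (lam * t)) <= 1) by (rewrite <- exp_0; apply expm; nra).
    assert (0 < Rpower t (y - 1)) by (unfold Rpower; apply exp_pos). nra. }
  assert (H3 : RInt (w lam y) 1 b' <= 2 * exp (2 * y * y / lam) / lam).
  { eapply Rle_trans; [| apply (int_exp lam); [auto | apply Rlt_le, exp_pos | auto]].
    apply RInt_le; auto. apply exR; auto using w_cont; lra.
    apply (ex_RInt_continuous (V:=R_CompleteNormedModule)). intros t _.
    apply (ex_derive_continuous (K:=R_AbsRing) (V:=R_NormedModule)). auto_derive. auto.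
    intros t Ht. unfold w, Rpower. rewrite <- exp_plus, <- exp_plus.
    apply expm.
    assert (0 <= ln t) by (rewrite <- ln_1; apply ln_le; lra).
    assert (Hk := key_bound lam y t Hl Hy ltac:(lra)). nra. apply Hb'1. }
  lra.
Qed.

From Stdlib Require Import Reals Lra Classical FunctionalExtensionality.
From Coquelicot Require Import Coquelicot.
Open Scope R_scope.

Lemma ev_right : at_right 0 (fun a => 0 < a).
Proof. exists (mkposreal 1 Rlt_0_1). intros; auto. Qed.

Lemma ev_inf : Rbar_locally p_infty (fun b => 0 < b).
Proof. exists 0. intros; auto. Qed.

Lemma IG_ext f g l : (forall t, 0 < t -> f t = g t) -> IG f l -> IG g l.
Proof.
  intros H HI. unfold IG in *. apply (is_RInt_gen_ext f); auto.
  apply Filter_prod with (fun a => 0 < a) (fun b => 0 < b).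
  apply ev_right. apply ev_inf.
  intros a b Ha Hb t Ht. simpl in Ht. apply H.
  assert (0 < Rmin a b) by (apply Rmin_glb_lt; auto). lra.
Qed.

Lemma RInt_pos_strict f t0 : cpos f -> 0 < t0 -> 0 < f t0 ->
  exists a b, 0 < a /\ a <= b /\ 0 < RInt f a b.
Proof.
  intros Hc Ht0 Hv.
  assert (H := Hc t0 Ht0). unfold filterlim, filter_le, filtermap in H.
  destruct (H (ball (f t0) (mkposreal (f t0 / 2) ltac:(lra))) (locally_ball _ _)) as [d Hd].
  assert (Hd0 := cond_pos d).
  set (e := Rmin d t0 / 2).
  assert (He : 0 < e) by (unfold e; assert (0 < Rmin d t0) by (apply Rmin_glb_lt; auto); lra).
  assert (He1 : e < d) by (unfold e; assert (Rmin d t0 <= d) by apply Rmin_l; lra).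
  assert (He2 : e < t0) by (unfold e; assert (Rmin d t0 <= t0) by apply Rmin_r; lra).
  exists (t0 - e), (t0 + e). split. lra. split. lra.
  assert (Hle : RInt (fun _ => f t0 / 2) (t0 - e) (t0 + e) <= RInt f (t0 - e) (t0 + e)).
  { apply RInt_le. lra. apply ex_RInt_const. apply exR; auto; lra.
    intros s Hs. assert (Hb : ball t0 d s) by (apply abs_ball; apply Rabs_def1; lra).
    apply Hd in Hb. apply ball_abs in Hb. simpl in Hb. apply Rabs_def2 in Hb. lra. }
  rewrite RInt_const, Lscal in Hle. nra.
Qed.

Lemma IG_pos f l t0 : cpos f -> npos f -> IG f l -> 0 < t0 -> 0 < f t0 -> 0 < l.
Proof.
  intros Hc Hn H Ht0 Hv. destruct (RInt_pos_strict f t0 Hc Ht0 Hv) as [a [b [Ha [Hab Hp]]]].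
  assert (RInt f a b <= l) by (apply IG_le; auto). lra.
Qed.

Lemma w_conv lam y : 0 < lam -> 0 < y -> exists J, IG (w lam y) J.
Proof.
  intros Hl Hy. apply (IG_conv _ (1 / y + 2 * exp (2 * y * y / lam) / lam)).
  apply w_cont. apply w_npos. apply w_bound; auto.
Qed.

Lemma w_Jpos lam y J : IG (w lam y) J -> 0 < J.
Proof. intros H. apply (IG_pos _ _ 1 (w_cont lam y) (w_npos lam y) H Rlt_0_1 (w_pos _ _ _)). Qed.

Lemma Fp_derive lam y t : 0 < t -> is_derive (Fp lam y) t ((y - lam * t) * w lam y t).
Proof.
  intros Ht. unfold Fp. auto_derive. lra. rewrite w_Fp by auto. unfold Fp. unfold Rminus. field. lra.
Qed.

Lemma Fp_lim0 lam y : 0 < lam -> 0 < y -> filterlim (Fp lam y) (at_right 0) (locally 0).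
Proof.
  intros Hl Hy P [eps HP]. unfold filtermap.
  assert (He := cond_pos eps).
  exists (mkposreal (exp (ln eps / y)) (exp_pos _)). intros t Ht Ht0.
  apply ball_abs in Ht. simpl in Ht. rewrite Rminus_0_r, Rabs_pos_eq in Ht by lra.
  apply HP. apply abs_ball. rewrite Rminus_0_r. unfold Fp. rewrite Rabs_pos_eq by (apply Rlt_le, exp_pos).
  apply exp_lt_ln; auto.
  assert (Hlt : ln t < ln eps / y).
  { rewrite <- (ln_exp (ln eps / y)). apply ln_increasing; auto. }
  assert (y * ln t < ln eps).
  { apply (Rmult_lt_compat_l y) in Hlt; auto. replace (y * (ln eps / y)) with (ln eps) in Hlt by (field; lra). auto. }
  nra.
Qed.

Lemma Fp_liminf lam y : 0 < lam -> 0 < y -> filterlim (Fp lam y) (Rbar_locally p_infty) (locally 0).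
Proof.
  intros Hl Hy P [eps HP]. unfold filtermap.
  assert (He := cond_pos eps).
  set (C := 2 * y * y / lam - ln eps).
  exists (Rmax 1 (2 / lam * C)). intros t Ht.
  assert (Ht1 := Rmax_l 1 (2 / lam * C)). assert (Ht2 := Rmax_r 1 (2 / lam * C)).
  apply HP. apply abs_ball. rewrite Rminus_0_r. unfold Fp. rewrite Rabs_pos_eq by (apply Rlt_le, exp_pos).
  apply exp_lt_ln; auto.
  assert (Hk := key_bound lam y t Hl Hy ltac:(lra)).
  assert (C < lam * t / 2).
  { assert (2 / lam * C < t) by lra.
    apply (Rmult_lt_compat_l (lam / 2)) in H; [|lra].
    replace (lam / 2 * (2 / lam * C)) with C in H by (field; lra). lra. }
  unfold C in *. lra.
Qed.

Lemma mean_zero lam y : 0 < lam -> 0 < y -> IG (fun t => (y - lam * t) * w lam y t) 0.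
Proof.
  intros Hl Hy.
  assert (H : is_RInt_gen (Derive (Fp lam y)) (at_right 0) (Rbar_locally p_infty) (0 - 0)).
  { apply is_RInt_gen_Derive.
    - apply Filter_prod with (fun a => 0 < a) (fun b => 0 < b). apply ev_right. apply ev_inf.
      intros a b Ha Hb t Ht. simpl in Ht.
      assert (0 < Rmin a b) by (apply Rmin_glb_lt; auto).
      exists ((y - lam * t) * w lam y t). apply Fp_derive. lra.
    - apply Filter_prod with (fun a => 0 < a) (fun b => 0 < b). apply ev_right. apply ev_inf.
      intros a b Ha Hb t Ht. simpl in Ht.
      assert (0 < Rmin a b) by (apply Rmin_glb_lt; auto).
      apply (continuous_ext_loc _ (fun t => (y - lam * t) * w lam y t)).
      + assert (Htp : 0 < t / 2) by lra.
        exists (mkposreal _ Htp). intros s Hs. apply ball_abs in Hs. simpl in Hs.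
        apply Rabs_def2 in Hs. symmetry. apply is_derive_unique. apply Fp_derive. lra.
      + apply (ex_derive_continuous (K:=R_AbsRing) (V:=R_NormedModule)). unfold w, Rpower.
        auto_derive. lra.
    - apply Fp_lim0; auto.
    - apply Fp_liminf; auto. }
  replace 0 with (0 - 0) by ring.
  apply (IG_ext (Derive (Fp lam y))). intros t Ht. apply is_derive_unique. apply Fp_derive; auto.
  exact H.
Qed.

Lemma w_scale lam y a b : 0 < lam -> 0 < a -> 0 < b ->
  Rpower lam y * RInt (w lam y) a b = RInt (w 1 y) (lam * a) (lam * b).
Proof.
  intros Hl Ha Hb.
  assert (H := RInt_comp_lin (V:=R_CompleteNormedModule) (w 1 y) lam 0 a b).
  rewrite !Rplus_0_r in H. rewrite <- H by (apply exR; auto using w_cont; nra).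
  rewrite <- (RInt_scal (V:=R_CompleteNormedModule)) by (apply exR; auto using w_cont).
  apply RInt_ext. intros t Ht.
  assert (0 < Rmin a b) by (apply Rmin_glb_lt; auto).
  assert (Htp : 0 < t) by lra.
  rewrite !Lscal, Rplus_0_r. unfold w.
  rewrite <- (Rpower_mult_distr lam t) by auto.
  rewrite (Rpower_m1 lam) by auto. unfold Rpower at 1. rewrite Rmult_1_l. change (scal lam ?u) with (lam * u). match goal with |- ?u = ?v => change (@eq R u v) end. field. lra.
Qed.

Lemma gamma_rel lam y J : 0 < lam -> 0 < y -> IG (w lam y) J -> Defs.Gamma y = Rpower lam y * J.
Proof.
  intros Hl Hy HJ.
  destruct (w_conv 1 y Rlt_0_1 Hy) as [L1 HL1].
  assert (HG : Defs.Gamma y = L1).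
  { unfold Defs.Gamma. apply (is_RInt_gen_unique (V:=R_CompleteNormedModule)).
    apply (IG_ext (w 1 y)); auto. intros t _. unfold w. rewrite Rmult_1_l. auto. }
  rewrite HG.
  assert (HP : 0 < Rpower lam y) by (unfold Rpower; apply exp_pos).
  apply Rle_antisym.
  - apply (IG_ge _ _ (Rpower lam y * J) HL1). intros a b Ha Hab.
    replace a with (lam * (a / lam)) by (field; lra).
    replace b with (lam * (b / lam)) by (field; lra).
    assert (0 < a / lam) by (apply Rdiv_lt_0_compat; auto).
    rewrite <- w_scale by (auto; apply Rdiv_lt_0_compat; lra).
    apply Rmult_le_compat_l. lra. apply IG_le; auto using w_cont, w_npos.
    apply Rmult_le_compat_r. apply Rlt_le, Rinv_0_lt_compat; auto. auto.
  - assert (J <= L1 / Rpower lam y).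
    { apply (IG_ge _ _ _ HJ). intros a b Ha Hab.
      apply (Rmult_le_reg_l (Rpower lam y)); auto.
      rewrite w_scale by lra. replace (Rpower lam y * (L1 / Rpower lam y)) with L1 by (field; lra).
      apply IG_le; auto using w_cont, w_npos. nra. nra. }
    apply (Rmult_le_compat_l (Rpower lam y)) in H; [|lra].
    replace (Rpower lam y * (L1 / Rpower lam y)) with L1 in H by (field; lra). lra.
Qed.

From Stdlib Require Import Reals Lra Classical FunctionalExtensionality.
From Coquelicot Require Import Coquelicot.
Open Scope R_scope.


Lemma g_nn (g : R -> R) (HCM : completely_monotonic g) t : 0 < t -> 0 <= g t.
Proof. intros Ht. destruct (HCM 0%nat t Ht) as [_ H]. simpl in H. lra. Qed.

Lemma g_ex (g : R -> R) (HCM : completely_monotonic g) t : 0 < t -> ex_derive g t.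
Proof. intros Ht. destruct (HCM 1%nat t Ht) as [H _]. exact H. Qed.

Lemma g_ex2 (g : R -> R) (HCM : completely_monotonic g) t : 0 < t -> ex_derive (Derive g) t.
Proof. intros Ht. destruct (HCM 2%nat t Ht) as [H _]. exact H. Qed.

Lemma g2_nn (g : R -> R) (HCM : completely_monotonic g) t : 0 < t -> 0 <= Derive (Derive g) t.
Proof.
  intros Ht. destruct (HCM 2%nat t Ht) as [_ H].
  change (0 <= (-1) ^ 2 * Derive (Derive g) t) in H. simpl in H. lra.
Qed.

Lemma gp_mono (g : R -> R) (HCM : completely_monotonic g) u v : 0 < u -> u <= v -> Derive g u <= Derive g v.
Proof.
  intros Hu Huv.
  destruct (MVT_gen (Derive g) u v (Derive (Derive g))) as [c [Hc Heq]].
  - intros t Ht. rewrite Rmin_left in Ht by lra. apply Derive_correct, (g_ex2 g HCM). lra.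
  - intros t Ht. rewrite Rmin_left in Ht by lra. apply continuity_pt_filterlim.
    apply (ex_derive_continuous (K:=R_AbsRing) (V:=R_NormedModule)). apply (g_ex2 g HCM). lra.
  - rewrite Rmin_left, Rmax_right in Hc by lra.
    assert (0 <= Derive (Derive g) c) by (apply (g2_nn g HCM); lra). nra.
Qed.

Lemma g_convex (g : R -> R) (HCM : completely_monotonic g) x t : 0 < x -> 0 < t -> g x + Derive g x * (t - x) <= g t.
Proof.
  intros Hx Ht.
  destruct (MVT_gen g x t (Derive g)) as [c [Hc Heq]].
  - intros s Hs. assert (0 < Rmin x t) by (apply Rmin_glb_lt; auto).
    apply Derive_correct, (g_ex g HCM). lra.
  - intros s Hs. assert (0 < Rmin x t) by (apply Rmin_glb_lt; auto).
    apply continuity_pt_filterlim.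
    apply (ex_derive_continuous (K:=R_AbsRing) (V:=R_NormedModule)). apply (g_ex g HCM). lra.
  - destruct (Rle_or_lt x t) as [Hxt|Htx].
    + rewrite Rmin_left, Rmax_right in Hc by lra.
      assert (Derive g x <= Derive g c) by (apply (gp_mono g HCM); lra). nra.
    + rewrite Rmin_right, Rmax_left in Hc by lra.
      assert (Derive g c <= Derive g x) by (apply (gp_mono g HCM); lra). nra.
Qed.

Lemma IG_val f l1 l2 : IG f l1 -> l1 = l2 -> IG f l2.
Proof. intros H ->. exact H. Qed.

Theorem corollary2p6 (g : R -> R) :
  completely_monotonic g -> bounded_on_pos g -> nonconstant_on_pos g ->
  forall x y : R, 0 < x -> 0 < y ->
    exists I : R,
      is_RInt_gen (fun t => g t * Rpower t (y - 1) * exp (- (t * y / x)))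
        (at_right 0) (Rbar_locally p_infty) I /\
      g x < Rpower (y / x) y / Gamma y * I.
Proof.
  intros HCM [M HM] [a0 [b0 [Ha0 [Hb0 Hab0]]]] x y Hx Hy.
  set (lam := y / x).
  assert (Hl : 0 < lam) by (unfold lam; apply Rdiv_lt_0_compat; auto).
  replace (fun t => g t * Rpower t (y - 1) * exp (- (t * y / x))) with (fun t => g t * w lam y t).
  2:{ apply functional_extensionality. intros t. unfold w, lam.
      replace (t * y / x) with (y / x * t) by (field; lra). ring. }
  destruct (w_conv lam y Hl Hy) as [J HJ].
  assert (HJp := w_Jpos _ _ _ HJ).
  assert (HM0 : 0 <= M) by (assert (H := HM 1 Rlt_0_1); assert (H' := Rabs_pos (g 1)); lra).
  assert (Hgc : cpos (fun t => g t * w lam y t)).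
  { intros t Ht. apply (ex_derive_continuous (K:=R_AbsRing) (V:=R_NormedModule)).
    unfold w, Rpower. auto_derive. split. apply (g_ex g HCM); auto. lra. }
  assert (Hgn : npos (fun t => g t * w lam y t)).
  { intros t Ht. apply Rmult_le_pos. apply (g_nn g HCM); auto. apply w_npos; auto. }
  destruct (IG_conv (fun t => g t * w lam y t) (M * J) Hgc Hgn) as [I HI].
  { intros a b Ha Hab.
    apply Rle_trans with (RInt (fun t => M * w lam y t) a b).
    - apply RInt_le; auto. apply exR; auto; lra.
      apply exR; auto; try lra. intros t Ht. apply (ex_derive_continuous (K:=R_AbsRing) (V:=R_NormedModule)).
      unfold w, Rpower. auto_derive. lra.
      intros t Ht. apply Rmult_le_compat_r. apply w_npos; lra.
      assert (H := HM t ltac:(lra)). assert (H' := Rle_abs (g t)). lra.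
    - assert (E : RInt (fun t => M * w lam y t) a b = M * RInt (w lam y) a b).
      { rewrite <- Lscal. rewrite <- (RInt_scal (V:=R_CompleteNormedModule)). reflexivity.
        apply exR; auto using w_cont; lra. }
      rewrite E. apply Rmult_le_compat_l; auto. apply IG_le; auto using w_cont, w_npos. }
  exists I. split. exact HI.
  set (D := Derive g x).
  set (h := fun t => g t - g x - D * (t - x)).
  assert (Hh : IG (fun t => h t * w lam y t) (I - g x * J)).
  { assert (H1 := is_RInt_gen_scal (Fa:=at_right 0) (Fb:=Rbar_locally p_infty) _ (g x) _ HJ).
    assert (H2 := is_RInt_gen_scal (Fa:=at_right 0) (Fb:=Rbar_locally p_infty) _ (- D / lam) _ (mean_zero lam y Hl Hy)).
    assert (H3 := is_RInt_gen_minus (Fa:=at_right 0) (Fb:=Rbar_locally p_infty) _ _ _ _ HI H1).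
    assert (H4 := is_RInt_gen_minus (Fa:=at_right 0) (Fb:=Rbar_locally p_infty) _ _ _ _ H3 H2).
    apply (IG_ext (fun t => minus (minus (g t * w lam y t) (scal (g x) (w lam y t))) (scal (- D / lam) ((y - lam * t) * w lam y t)))).
    - intros t Ht.
      repeat change (minus ?u ?v) with (u - v). repeat change (scal ?u ?v) with (u * v).
      match goal with |- ?u = ?v => change (@eq R u v) end.
      unfold h, lam. field. split; lra.
    - apply (IG_val _ _ _ H4).
      repeat change (minus ?u ?v) with (u - v). repeat change (scal ?u ?v) with (u * v).
      match goal with |- ?u = ?v => change (@eq R u v) end. ring. }
  assert (Hhc : cpos (fun t => h t * w lam y t)).
  { intros t Ht. apply (ex_derive_continuous (K:=R_AbsRing) (V:=R_NormedModule)).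
    unfold h, w, Rpower. auto_derive. split. apply (g_ex g HCM); auto. lra. }
  assert (Hhn : npos (fun t => h t * w lam y t)).
  { intros t Ht. apply Rmult_le_pos. unfold h. assert (H := g_convex g HCM x t Hx Ht). fold D in H. lra.
    apply w_npos; auto. }
  assert (Ht0 : exists t0, 0 < t0 /\ 0 < h t0).
  { apply NNPP. intros Hno.
    assert (Hlin : forall t, 0 < t -> g t = g x + D * (t - x)).
    { intros t Ht. assert (H := g_convex g HCM x t Hx Ht). fold D in H.
      destruct (Rle_lt_or_eq_dec _ _ H) as [Hlt|Heq]; [|auto].
      exfalso. apply Hno. exists t. split; auto. unfold h. lra. }
    assert (Hgx := g_nn g HCM x Hx).
    destruct (Rtotal_order D 0) as [Dn|[Dz|Dp]].
    - set (t := x + (M + 1 + g x) / (- D)).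
      assert (Hq : 0 < (M + 1 + g x) / (- D)) by (apply Rdiv_lt_0_compat; lra).
      assert (Ht : 0 < t) by (unfold t; lra).
      assert (E : g t = - (M + 1)) by (rewrite Hlin by auto; unfold t; field; lra).
      assert (H := HM t Ht). rewrite E, Rabs_Ropp, Rabs_pos_eq in H; lra.
    - apply Hab0. rewrite (Hlin a0), (Hlin b0) by auto. rewrite Dz. ring.
    - set (t := x + (M + 1) / D).
      assert (Hq : 0 < (M + 1) / D) by (apply Rdiv_lt_0_compat; lra).
      assert (Ht : 0 < t) by (unfold t; lra).
      assert (E : g t = g x + (M + 1)) by (rewrite Hlin by auto; unfold t; field; lra).
      assert (H := HM t Ht). assert (H' := Rle_abs (g t)). lra. }
  destruct Ht0 as [t0 [Ht0 Hht0]].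
  assert (Hpos : 0 < I - g x * J).
  { apply (IG_pos _ _ t0 Hhc Hhn Hh Ht0). apply Rmult_lt_0_compat; auto. apply w_pos. }
  rewrite (gamma_rel lam y J Hl Hy HJ). fold lam.
  assert (HP : 0 < Rpower lam y) by (unfold Rpower; apply exp_pos).
  replace (Rpower lam y / (Rpower lam y * J) * I) with (g x + (I - g x * J) / J) by (field; lra).
  assert (0 < (I - g x * J) / J) by (apply Rdiv_lt_0_compat; auto). lra.
Qed.
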